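(* Fix parameters $\tau\in(0,1/100)$ and $M\ge2$, and let $\theta=2+\tau$. Let $G$ be a non-trivial and structured GCD graph with set of primes $\mathcal{P}$ such that \[ \mathcal{R}(G)\subseteq\{p> C_6\} \quad\text{and}\quad \mathcal{R}_+(G)\neq\emptyset. \] Then there is a denominator-exact GCD subgraph $G'$ of $G$ with multiplicative data $(\mathcal{P}',f',g')$ such that: (a) $G'$ is non-trivial and maximal; (b) $\mathcal{P}\subsetneq\mathcal{P}'\subseteq \mathcal{P}\cup \mathcal{R}_+(G)$, $\mathcal{R}_+(G')\subsetneq \mathcal{R}_+(G)$, and $\mathcal{R}_-(G')\subseteq \mathcal{R}_-(G)$; (c) $f'(p)\ge0$ and $g'(p)\ge0$ for all $p\in\mathcal{P}'\setminus\mathcal{P}$; (d) $q(G')\geqslant q(G)\prod_{p\in\mathcal{P}'\setminus\mathcal{P}} (1-\mathbbm{1}_{f'(p)=g'(p)>0}/p)^2 (1-1/p^{1+\frac{\tau}{4}})$.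
   Context: For a prime $p$, $k\in\mathbb{Z}$ and $\rho\in\mathbb{Q}_{>0}$, write $\operatorname{e}_p(\rho)=k$ if $\rho=p^ka/q$ with $a,q\in\mathbb{N}$, $p\nmid aq$. For real $t$, $t^+=\max\{t,0\}$, $t^-=\max\{-t,0\}$. Weighted bipartite graph: $(\mu,\mathcal{V},\mathcal{W},\mathcal{E})$ with $\mu:\mathbb{R}_{>0}\to\mathbb{R}_{>0}$, $\mathcal{V},\mathcal{W}$ finite sets of positive reals, $\mathcal{E}\subseteq\mathcal{V}\times\mathcal{W}$; $\mu(\mathcal{T})=\sum_{t\in\mathcal{T}}\mu(t)$, $\mu(\mathcal{E})=\sum_{(v,w)\in\mathcal{E}}\mu(v)\mu(w)$; edge density $\delta=\mu(\mathcal{E})/(\mu(\mathcal{V})\mu(\mathcal{W}))$ if $\mathcal{E}\neq\emptyset$, else $0$; $\mu^{(\theta)}=\delta^\theta\mu(\mathcal{V})\mu(\mathcal{W})$. A subgraph has $\mathcal{V}'\subseteq\mathcal{V}$, $\mathcal{W}'\subseteq\mathcal{W}$, $\mathcal{E}'\subseteq\mathcal{E}\cap(\mathcal{V}'\times\mathcal{W}')$, same $\mu$. ''Maximal'' means $\mu^{(\theta)}(G)\ge\mu^{(\theta)}(G')$ for every subgraph $G'$ (with $\theta=2+\tau$). GCD graph: a septuple $G=(\mu,\mathcal{V},\mathcal{W},\mathcal{E},\mathcal{P},f,g)$ where $(\mu,\mathcal{V},\mathcal{W},\mathcal{E})$ is a weighted bipartite graph with $\mathcal{V},\mathcal{W}\subset\mathbb{Q}_{>0}$,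 $\mathcal{P}$ is a set of primes (its ''set of primes''; $(\mathcal{P},f,g)$ is its ''multiplicative data''), $f,g:\mathcal{P}\to\mathbb{Z}$, and for all $p\in\mathcal{P}$ and all $(a/q,b/r)\in\mathcal{V}\times\mathcal{W}$ with $\gcd(a,q)=\gcd(b,r)=1$: $p^{f^+(p)}\mid a$, $p^{g^+(p)}\mid b$, $p^{f^-(p)}\mid q$, $p^{g^-(p)}\mid r$, and if $(a/q,b/r)\in\mathcal{E}$ then the exact power of $p$ dividing $\gcd(a,b)$ is $p^{\min\{f^+(p),g^+(p)\}}$ and that dividing $\gcd(q,r)$ is $p^{\min\{f^-(p),g^-(p)\}}$. $G$ is non-trivial if $\mathcal{E}\neq\emptyset$. Quality: $q(G)=\mu^{(\theta)}(G)\prod_{p\in\mathcal{P}}p^{|f(p)-g(p)|}$. A GCD subgraph $G'=(\mu,\mathcal{V}',\mathcal{W}',\mathcal{E}',\mathcal{P}',f',g')$ of $G$ has $\mathcal{V}'\subseteq\mathcal{V}$, $\mathcal{W}'\subseteq\mathcal{W}$, $\mathcal{E}'\subseteq\mathcal{E}$, $\mathcal{P}'\supseteq\mathcal{P}$, $f'|_{\mathcal{P}}=f$, $g'|_{\mathcal{P}}=g$. It is denominator-exact if for every $p\in\mathcal{P}'\setminus\mathcal{P}$ and every $(a/q,b/r)\in\mathcal{V}'\times\mathcal{W}'$ with $\gcd(a,q)=\gcd(b,r)=1$, $p^{f'^-(p)}$ exactly divides $q$ and $p^{g'^-(p)}$ exactly divides $r$. $\mathcal{R}(G)$ is the set of primes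 $p\notin\mathcal{P}$ for which there is $(a/q,b/r)\in\mathcal{E}$ with $\gcd(a,q)=\gcd(b,r)=1$ and $p\mid\gcd(a,b)\gcd(q,r)$. $G$ is structured if for each $p\in\mathcal{R}(G)$ there is $k_p\in\mathbb{Z}$ with $(\operatorname{e}_p(v)-k_p,\operatorname{e}_p(w)-k_p)\in\{(-1,0),(0,-1),(0,0),(0,1),(1,0)\}$ for all $(v,w)\in\mathcal{E}$. For structured $G$, $\mathcal{R}_+(G)$ is the set of $p\in\mathcal{R}(G)$ with $\operatorname{e}_p(v)\ge0$ and $\operatorname{e}_p(w)\ge0$ for all $(v,w)\in\mathcal{E}$, and $\mathcal{R}_-(G)$ is the set of $p\in\mathcal{R}(G)$ with $\operatorname{e}_p(v)\le0$ and $\operatorname{e}_p(w)\le0$ for all $(v,w)\in\mathcal{E}$. Constants: $C_1=10^4/\tau$, $C_2=10MC_1^3$, $C_4=10^{10}M^2C_2^2$, $C_6=\max\{C_4,10^4MC_2,C_2^{10/\tau}\}$. *)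

(* Defs.v *)
From HB Require Import structures.
From mathcomp Require Import all_boot all_order all_algebra.
From mathcomp Require Import finmap.
From mathcomp Require Import reals exp.

Set Implicit Arguments.
Unset Strict Implicit.
Unset Printing Implicit Defensive.

Import Order.TTheory GRing.Theory Num.Theory.

Local Open Scope ring_scope.
Local Open Scope fset_scope.

Definition ipos (z : int) : nat := match z with Posz n => n | Negz _ => 0%N end.
Definition ineg (z : int) : nat := match z with Posz _ => 0%N | Negz n => n.+1 end.

Definition qnum (r : rat) : nat := absz (numq r).
Definition qden (r : rat) : nat := absz (denq r).

(* e_p(r) = k  iff  r = p^k a/q with p \nmid aq *)
Definition ep (p : nat) (r : rat) : int :=
  (logn p (qnum r))%:Z - (logn p (qden r))%:Z.

Definition exdiv (p k n : nat) : Prop := (p ^ k %| n)%N /\ ~~ (p ^ k.+1 %| n)%N.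

Record gcd_graph (R : realType) := GCDGraph {
  gmu : R -> R;
  gV : {fset rat};
  gW : {fset rat};
  gE : {fset (rat * rat)};
  gP : {fset nat};
  gf : nat -> int;
  gg : nat -> int
}.

Section GCDGraphs.
Variable R : realType.
Implicit Types (G : gcd_graph R).

Definition muT G (T : {fset rat}) : R := \sum_(t <- T) gmu G (ratr t).
Definition muE G (E : {fset (rat * rat)}) : R :=
  \sum_(e <- E) (gmu G (ratr e.1) * gmu G (ratr e.2)).

Definition density (mu : R -> R) (V W : {fset rat}) (E : {fset (rat * rat)}) : R :=
  if E == fset0 then 0
  else (\sum_(e <- E) (mu (ratr e.1) * mu (ratr e.2))) /
       ((\sum_(t <- V) mu (ratr t)) * (\sum_(t <- W) mu (ratr t))).

Definition mutheta (theta : R) (mu : R -> R) (V W : {fset rat})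
    (E : {fset (rat * rat)}) : R :=
  (density mu V W E) `^ theta *
  ((\sum_(t <- V) mu (ratr t)) * (\sum_(t <- W) mu (ratr t))).

Definition mu_theta (theta : R) G : R := mutheta theta (gmu G) (gV G) (gW G) (gE G).

Definition is_wbg (mu : R -> R) (V W : {fset rat}) (E : {fset (rat * rat)}) : Prop :=
  (forall x : R, 0 < x -> 0 < mu x) /\
  (forall t, t \in V -> 0 < t) /\ (forall t, t \in W -> 0 < t) /\
  (forall e, e \in E -> (e.1 \in V) && (e.2 \in W)).

Definition is_gcd_graph G : Prop :=
  is_wbg (gmu G) (gV G) (gW G) (gE G) /\
  (forall p, p \in gP G -> prime p) /\
  (forall p, p \in gP G -> forall v w, v \in gV G -> w \in gW G ->
     [/\ (p ^ ipos (gf G p) %| qnum v)%N, (p ^ ipos (gg G p) %| qnum w)%N,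
         (p ^ ineg (gf G p) %| qden v)%N, (p ^ ineg (gg G p) %| qden w)%N &
         ((v, w) \in gE G ->
            exdiv p (minn (ipos (gf G p)) (ipos (gg G p))) (gcdn (qnum v) (qnum w)) /\
            exdiv p (minn (ineg (gf G p)) (ineg (gg G p))) (gcdn (qden v) (qden w)))]).

Definition nontrivial G : Prop := gE G != fset0.

Definition quality (theta : R) G : R :=
  mu_theta theta G * \prod_(p <- gP G) (p%:R ^+ absz (gf G p - gg G p)).

Definition maximal (theta : R) G : Prop :=
  forall (V' W' : {fset rat}) (E' : {fset (rat * rat)}),
    V' `<=` gV G -> W' `<=` gW G ->
    (forall e, e \in E' -> [&& e \in gE G, e.1 \in V' & e.2 \in W']) ->
    mutheta theta (gmu G) V' W' E' <= mu_theta theta G.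

Definition gcd_subgraph (G' G : gcd_graph R) : Prop :=
  is_gcd_graph G' /\ gmu G' = gmu G /\
  gV G' `<=` gV G /\ gW G' `<=` gW G /\ gE G' `<=` gE G /\ gP G `<=` gP G' /\
  (forall p, p \in gP G -> gf G' p = gf G p /\ gg G' p = gg G p).

Definition denominator_exact (G' G : gcd_graph R) : Prop :=
  forall p, p \in gP G' -> p \notin gP G ->
  forall v w, v \in gV G' -> w \in gW G' ->
    exdiv p (ineg (gf G' p)) (qden v) /\ exdiv p (ineg (gg G' p)) (qden w).

Definition inR G (p : nat) : Prop :=
  prime p /\ p \notin gP G /\
  exists e, e \in gE G /\
    (p %| gcdn (qnum e.1) (qnum e.2) * gcdn (qden e.1) (qden e.2))%N.

Definition structured G : Prop :=
  forall p, inR G p -> exists k : int, forall e, e \in gE G ->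
    let x := (ep p e.1 - k, ep p e.2 - k) in
    x \in [:: (-1, 0); (0, -1); (0, 0); (0, 1); (1, 0)].

Definition inRplus G (p : nat) : Prop :=
  inR G p /\ forall e, e \in gE G -> 0 <= ep p e.1 /\ 0 <= ep p e.2.
Definition inRminus G (p : nat) : Prop :=
  inR G p /\ forall e, e \in gE G -> ep p e.1 <= 0 /\ ep p e.2 <= 0.

End GCDGraphs.

Definition C1 {R : realType} (tau : R) : R := 10 ^+ 4 / tau.
Definition C2 {R : realType} (tau M : R) : R := 10 * M * (C1 tau) ^+ 3.
Definition C4 {R : realType} (tau M : R) : R := 10 ^+ 10 * M ^+ 2 * (C2 tau M) ^+ 2.
Definition C6 {R : realType} (tau M : R) : R :=
  Num.max (C4 tau M) (Num.max (10 ^+ 4 * M * C2 tau M) ((C2 tau M) `^ (10 / tau))).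

(* Main.v *)
Require Import Defs.
From HB Require Import structures.
From mathcomp Require Import all_boot all_order all_algebra.
From mathcomp Require Import finmap.
From mathcomp Require Import reals exp.
From mathcomp Require hoelder convex classical_sets.
From mathcomp Require Import ring lra zify.
Import Order.TTheory GRing.Theory Num.Theory.
Local Open Scope ring_scope.



Lemma powR_conv (R : realType) (th l x y : R) : 1 <= th -> 0 <= l -> l <= 1 ->
  0 <= x -> 0 <= y ->
  (l * x + (1 - l) * y) `^ th <= l * (x `^ th) + (1 - l) * (y `^ th).
Proof.
move=> h1 l0 l1 x0 y0.
have := @hoelder.convex_powR R th h1 (interval_inference.Itv01 l0 l1) x y.
rewrite !convex.convRE /=.
apply; apply: classical_sets.mem_set; rewrite /= in_itv /= andbT //.
Qed.

Section HF.
Variable R : realType.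
Implicit Types th m Z : R.

Definition Hf th m Z : R := (m / Z) `^ th * Z.

Lemma Hf0m th Z : 0 < th -> Hf th 0 Z = 0.
Proof. by move=> h; rewrite /Hf mul0r powR0 ?mul0r // gt_eqF. Qed.

Lemma Hf_ge0 th m Z : 0 <= Z -> 0 <= Hf th m Z.
Proof. by move=> hZ; rewrite /Hf mulr_ge0 // powR_ge0. Qed.

Lemma Hf_gt0 th m Z : 0 < m -> 0 < Z -> 0 < Hf th m Z.
Proof. by move=> hm hZ; rewrite /Hf mulr_gt0 // powR_gt0 // divr_gt0. Qed.

Lemma HfE th m Z : 1 < th -> 0 <= m -> 0 <= Z -> Hf th m Z = m * ((m / Z) `^ (th - 1)).
Proof.
move=> h1 hm hZ; rewrite /Hf.
have [->|Zn0] := eqVneq Z 0.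
  by rewrite invr0 !mulr0 powR0 ?mulr0 // subr_eq0 gt_eqF.
have th0 : th = (th - 1) + 1 by rewrite subrK.
rewrite {1}th0 powRD; last by rewrite -th0 gt_eqF // (lt_trans ltr01).
rewrite powRr1 ?divr_ge0 //.
by rewrite -mulrA divfK // mulrC.
Qed.

Lemma Hf_mono th m m' Z Z' : 1 < th -> 0 <= m -> m <= m' -> 0 < Z' -> Z' <= Z ->
  Hf th m Z <= Hf th m' Z'.
Proof.
move=> h1 hm hmm hZ' hZZ.
have hZ : 0 < Z by apply: lt_le_trans hZZ.
have hm' : 0 <= m' by apply: le_trans hmm.
rewrite !HfE ?(ltW hZ) ?(ltW hZ') //.
have hq : m / Z <= m' / Z'.
  apply: (@le_trans _ _ (m / Z')).
    by apply: ler_wpM2l => //; rewrite lef_pV2 // posrE.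
  by rewrite ler_wpM2r // invr_ge0 ltW.
apply: ler_pM => //; first by rewrite powR_ge0.
apply: ge0_ler_powR => //; first by rewrite subr_ge0 ltW.
- by rewrite nnegrE divr_ge0 // ltW.
- by rewrite nnegrE divr_ge0 // ltW.
Qed.

Lemma Hf_subadd th m1 m2 Z1 Z2 : 1 < th -> 0 <= m1 -> 0 <= m2 -> 0 <= Z1 -> 0 <= Z2 ->
  (0 < m1 -> 0 < Z1) -> (0 < m2 -> 0 < Z2) ->
  Hf th (m1 + m2) (Z1 + Z2) <= Hf th m1 Z1 + Hf th m2 Z2.
Proof.
move=> h1 hm1 hm2 hZ1 hZ2 p1 p2.
have th0 : 0 < th by apply: lt_trans h1.
have [e1|m1n0] := eqVneq m1 0.
  rewrite e1 add0r Hf0m // add0r.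
  have [e2|m2n0] := eqVneq m2 0; first by rewrite e2 !Hf0m ?add0r.
  have Z2p : 0 < Z2 by apply: p2; rewrite lt_neqAle eq_sym m2n0.
  by apply: Hf_mono => //; rewrite lerDr.
have [e2|m2n0] := eqVneq m2 0.
  rewrite e2 addr0 Hf0m // addr0.
  have Z1p : 0 < Z1 by apply: p1; rewrite lt_neqAle eq_sym m1n0.
  by apply: Hf_mono => //; rewrite lerDl.
have Z1p : 0 < Z1 by apply: p1; rewrite lt_neqAle eq_sym m1n0.
have Z2p : 0 < Z2 by apply: p2; rewrite lt_neqAle eq_sym m2n0.
have Zp : 0 < Z1 + Z2 by rewrite addr_gt0.
set l := Z1 / (Z1 + Z2).
have l0 : 0 <= l by rewrite divr_ge0 // ltW.
have l1 : l <= 1 by rewrite ler_pdivrMr // mul1r lerDl ltW.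
have := @powR_conv R th l (m1 / Z1) (m2 / Z2) (ltW h1) l0 l1 (divr_ge0 hm1 (ltW Z1p)) (divr_ge0 hm2 (ltW Z2p)).
have -> : l * (m1 / Z1) + (1 - l) * (m2 / Z2) = (m1 + m2) / (Z1 + Z2).
  rewrite /l; field; apply/andP; split; rewrite ?gt_eqF //.
move=> H; rewrite /Hf.
rewrite -(ler_pM2r Zp) in H.
apply: (le_trans H).
rewrite mulrDl /l -!mulrA.
have -> : (1 - Z1 / (Z1 + Z2)) = Z2 / (Z1 + Z2).
  field; rewrite gt_eqF //.
rewrite -!mulrA !(mulrC (_ `^ th)) !mulrA !divfK ?gt_eqF //.
Qed.
End HF.

Section NT.

Lemma qnum_gt0 (v : rat) : 0 < v -> (0 < qnum v)%N.
Proof. by move=> h; rewrite /qnum absz_gt0 -numq_gt0 in h *; rewrite gt_eqF. Qed.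

Lemma qden_gt0 (v : rat) : (0 < qden v)%N.
Proof. by rewrite /qden absz_gt0 gt_eqF // denq_gt0. Qed.

Lemma qcop (v : rat) : coprime (qnum v) (qden v).
Proof. exact: coprime_num_den. Qed.

Lemma dvd_logn p n : prime p -> (0 < n)%N -> (p %| n)%N = (0 < logn p n)%N.
Proof. by move=> pp n0; rewrite -(pfactor_dvdn 1 pp n0) expn1. Qed.

Lemma logn_one0 p a b : prime p -> (0 < a)%N -> (0 < b)%N -> coprime a b ->
  (logn p a == 0)%N || (logn p b == 0)%N.
Proof.
move=> pp a0 b0 cab; rewrite !eqn0Ngt -negb_and; apply/negP => /andP[ha hb].
rewrite -dvd_logn // in ha; rewrite -dvd_logn // in hb.
have : (p %| gcdn a b)%N by rewrite dvdn_gcd ha hb.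
by rewrite (eqP cab) dvdn1 => /eqP h; move: (prime_gt1 pp); rewrite h.
Qed.

Arguments logn_one0 {p a b}.
Arguments qnum_gt0 {v}.

Lemma ep_ge0 p (v : rat) : prime p -> 0 < v -> 0 <= ep p v ->
  logn p (qden v) = 0%N /\ ep p v = (logn p (qnum v))%:Z.
Proof.
move=> pp v0; rewrite /ep => h.
have := logn_one0 pp (qnum_gt0 v0) (qden_gt0 v) (qcop v).
case/orP => /eqP e; rewrite e in h *; last by rewrite subr0.
by split; lia.
Qed.

Lemma ep_le0 p (v : rat) : prime p -> 0 < v -> ep p v <= 0 ->
  logn p (qnum v) = 0%N /\ ep p v = - (logn p (qden v))%:Z.
Proof.
move=> pp v0; rewrite /ep => h.
have := logn_one0 pp (qnum_gt0 v0) (qden_gt0 v) (qcop v).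
case/orP => /eqP e; rewrite e in h *; first by rewrite sub0r.
by split; lia.
Qed.

Lemma divR p (v w : rat) : prime p -> 0 < v -> 0 < w ->
  (p %| gcdn (qnum v) (qnum w) * gcdn (qden v) (qden w))%N ->
  (1 <= ep p v /\ 1 <= ep p w) \/ (ep p v <= -1 /\ ep p w <= -1).
Proof.
move=> pp v0 w0; rewrite Euclid_dvdM // !dvdn_gcd.
have cv := logn_one0 pp (qnum_gt0 v0) (qden_gt0 v) (qcop v).
have cw := logn_one0 pp (qnum_gt0 w0) (qden_gt0 w) (qcop w).
rewrite /ep !dvd_logn ?qnum_gt0 ?qden_gt0 //.
case/orP => /andP[h1 h2].
  by left; case/orP: cv => /eqP e1; case/orP: cw => /eqP e2; lia.
by right; case/orP: cv => /eqP e1; case/orP: cw => /eqP e2; lia.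
Qed.
End NT.
Arguments ep_ge0 {p v}.
Arguments ep_le0 {p v}.
Arguments divR {p v w}.
Arguments dvd_logn {p n}.

Definition pcase (a b k : int) : Prop :=
  (a = k - 1 /\ b = k) \/ (a = k /\ b = k - 1) \/ (a = k /\ b = k) \/
  (a = k /\ b = k + 1) \/ (a = k + 1 /\ b = k).

Lemma pat_cases (a b k : int) :
  (a - k, b - k) \in [:: (-1, 0); (0, -1); (0, 0); (0, 1); (1, 0)] -> pcase a b k.
Proof.
rewrite /pcase !inE.
case/orP => [/eqP [h1 h2]|]; first by lia.
case/orP => [/eqP [h1 h2]|]; first by lia.
case/orP => [/eqP [h1 h2]|]; first by lia.
case/orP => [/eqP [h1 h2]|]; first by lia.
move=> /eqP [h1 h2]; lia.
Qed.

Lemma pcase_pos {a b k} : pcase a b k -> 1 <= k -> 0 <= a /\ 0 <= b.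
Proof. rewrite /pcase; lia. Qed.
Lemma pcase_k {a b k} : pcase a b k -> 1 <= a -> 1 <= b -> 1 <= k.
Proof. rewrite /pcase; lia. Qed.
Lemma pcase_neg {a0 b0 a b k} : pcase a0 b0 k -> a0 <= -1 -> b0 <= -1 ->
  pcase a b k -> a <= 0 /\ b <= 0.
Proof. rewrite /pcase; lia. Qed.
Lemma contra01 {a : int} : 0 <= a -> a <= -1 -> False.
Proof. lia. Qed.
Lemma contra10 {a : int} : 1 <= a -> a <= 0 -> False.
Proof. lia. Qed.

Section Graph.
Variable R : realType.
Implicit Types G : gcd_graph R.

Lemma edge_pos {G e} : is_gcd_graph G -> e \in gE G ->
  [/\ 0 < e.1, 0 < e.2, e.1 \in gV G & e.2 \in gW G].
Proof.
case=> [[_ [hV [hW hE]]] _] he; have /andP[h1 h2] := hE e he.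
by split => //; [apply: hV | apply: hW].
Qed.

Lemma struct_k {G q} : is_gcd_graph G -> structured G -> inR G q ->
  exists k : int, forall e, e \in gE G -> pcase (ep q e.1) (ep q e.2) k.
Proof.
move=> gG sG hR; have [k hk] := sG q hR.
by exists k => e he; apply: pat_cases; apply: hk.
Qed.

Lemma struct_pos {G q e0} : is_gcd_graph G -> structured G -> inR G q ->
  e0 \in gE G -> 1 <= ep q e0.1 -> 1 <= ep q e0.2 ->
  exists k : int, 1 <= k /\ forall e, e \in gE G -> pcase (ep q e.1) (ep q e.2) k.
Proof.
move=> gG sG hR he0 h1 h2; have [k hk] := struct_k gG sG hR.
by exists k; split; [exact: (pcase_k (hk _ he0) h1 h2)|exact: hk].
Qed.

Lemma struct_neg {G q e0} : is_gcd_graph G -> structured G -> inR G q ->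
  e0 \in gE G -> ep q e0.1 <= -1 -> ep q e0.2 <= -1 ->
  forall e, e \in gE G -> ep q e.1 <= 0 /\ ep q e.2 <= 0.
Proof.
move=> gG sG hR he0 h1 h2; have [k hk] := struct_k gG sG hR.
move=> e he; exact: (pcase_neg (hk _ he0) h1 h2 (hk _ he)).
Qed.

End Graph.
Arguments edge_pos {R G e}.
Arguments struct_k {R G q}.
Arguments struct_pos {R G q e0}.
Arguments struct_neg {R G q e0}.

Lemma exdivE p k n : prime p -> (0 < n)%N -> logn p n = k -> exdiv p k n.
Proof.
move=> pp n0 e; rewrite /exdiv !pfactor_dvdn // e; split => //.
by rewrite ltnn.
Qed.

Section Opt.
Variable R : realType.
Variable G : gcd_graph R.
Variables (p i j : nat) (sv sw : int -> bool).
Hypothesis gG : is_gcd_graph G.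
Hypothesis pp : prime p.
Hypothesis pnP : p \notin gP G.
Hypothesis hV : forall v, v \in gV G -> sv (ep p v) -> i%:Z <= ep p v.
Hypothesis hW : forall w, w \in gW G -> sw (ep p w) -> j%:Z <= ep p w.
Hypothesis hE : forall e, e \in gE G -> sv (ep p e.1) -> sw (ep p e.2) ->
  ep p e.1 = (minn i j)%:Z \/ ep p e.2 = (minn i j)%:Z.

Definition Vo := [fset v in gV G | sv (ep p v)]%fset.
Definition Wo := [fset w in gW G | sw (ep p w)]%fset.
Definition Eo := [fset e in gE G | (e.1 \in Vo) && (e.2 \in Wo)]%fset.
Definition fo q : int := if q == p then i%:Z else gf G q.
Definition go q : int := if q == p then j%:Z else gg G q.
Definition mkG V W E := GCDGraph (gmu G) V W E (p |` gP G)%fset fo go.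

Lemma inVo v : (v \in Vo) = (v \in gV G) && sv (ep p v).
Proof. by rewrite !inE. Qed.
Lemma inWo v : (v \in Wo) = (v \in gW G) && sw (ep p v).
Proof. by rewrite !inE. Qed.
Lemma inEo e : (e \in Eo) = [&& e \in gE G, e.1 \in Vo & e.2 \in Wo].
Proof. by rewrite !inE. Qed.

Variables (V W : {fset rat}) (E : {fset (rat * rat)}).
Hypothesis hVs : (V `<=` Vo)%fset.
Hypothesis hWs : (W `<=` Wo)%fset.
Hypothesis hEs : forall e, e \in E -> [&& e \in Eo, e.1 \in V & e.2 \in W].

Lemma vV v : v \in V -> [/\ v \in gV G, sv (ep p v), 0 < v & i%:Z <= ep p v].
Proof.
move=> hv; have := fsubsetP hVs v hv; rewrite inVo => /andP[a b].
case: gG => [[_ [hV0 _]] _]; split => //; first exact: hV0.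
exact: hV.
Qed.

Lemma wW w : w \in W -> [/\ w \in gW G, sw (ep p w), 0 < w & j%:Z <= ep p w].
Proof.
move=> hw; have := fsubsetP hWs w hw; rewrite inWo => /andP[a b].
case: gG => [[_ [_ [hW0 _]]] _]; split => //; first exact: hW0.
exact: hW.
Qed.

Lemma mkG_gcd : is_gcd_graph (mkG V W E).
Proof.
case: gG => [[hmu [hV0 [hW0 hE0]]] [hP hPP]].
split; [split; [exact: hmu|split; [|split]]|split].
- by move=> t /vV [].
- by move=> t /wW [].
- by move=> e /hEs /and3P[_ -> ->].
- by move=> q /=; rewrite in_fset1U => /orP[/eqP -> //|]; apply: hP.
move=> q /=; rewrite in_fset1U /fo /go => /orP[/eqP ->|qP] v w hv hw; last first.
  have qp : q != p by apply: contraNneq pnP => <-.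
  rewrite (negbTE qp).
  have [hvG _ _ _] := vV _ hv; have [hwG _ _ _] := wW _ hw.
  have [h1 h2 h3 h4 h5] := hPP q qP v w hvG hwG.
  split => // hvw; apply: h5; have := hEs _ hvw; rewrite inEo => /and3P[/andP[]] //.
rewrite eqxx.
have [_ _ v0 iv] := vV _ hv; have [_ _ w0 jw] := wW _ hw.
have [dv ev] := ep_ge0 pp v0 (le_trans (le0z_nat i) iv).
have [dw ew] := ep_ge0 pp w0 (le_trans (le0z_nat j) jw).
rewrite /= ev in iv; rewrite ew in jw.
split.
- by rewrite pfactor_dvdn ?qnum_gt0 //; lia.
- by rewrite pfactor_dvdn ?qnum_gt0 //; lia.
- by rewrite expn0 dvd1n.
- by rewrite expn0 dvd1n.
move=> hvw; have := hEs _ hvw; rewrite inEo => /and3P[/and3P[he ha hb] _ _].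
rewrite inVo in ha; rewrite inWo in hb.
case/andP: ha => _ ha; case/andP: hb => _ hb.
have := hE _ he ha hb; rewrite /= ev ew => hm.
split; apply: exdivE => //; rewrite ?gcdn_gt0 ?qnum_gt0 ?qden_gt0 //.
  rewrite logn_gcd ?qnum_gt0 //; move: iv jw hm; clear.
  by move: (logn p (qnum v)) (logn p (qnum w)) => a b; lia.
by rewrite logn_gcd ?qden_gt0 // dv dw.
Qed.

Lemma mkG_sub : gcd_subgraph (mkG V W E) G.
Proof.
split; first exact: mkG_gcd.
split => //=; split.
  by apply/fsubsetP => v /vV [].
split; first by apply/fsubsetP => v /wW [].
split.
  by apply/fsubsetP => e /hEs /and3P[]; rewrite inEo => /and3P[].
split; first by apply/fsubsetP => q qP; rewrite in_fset1U qP orbT.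
move=> q qP; have qp : q != p by apply: contraNneq pnP => <-.
by rewrite /fo /go (negbTE qp).
Qed.

Lemma mkG_dex : denominator_exact (mkG V W E) G.
Proof.
move=> q /=; rewrite in_fset1U => /orP[/eqP ->|qP] qnP; last by rewrite qP in qnP.
move=> v w hv hw; rewrite /fo /go eqxx /=.
have [_ _ v0 iv] := vV _ hv; have [_ _ w0 jw] := wW _ hw.
have [dv _] := ep_ge0 pp v0 (le_trans (le0z_nat i) iv).
have [dw _] := ep_ge0 pp w0 (le_trans (le0z_nat j) jw).
by split; apply: exdivE => //; rewrite qden_gt0.
Qed.

End Opt.

Section Transfer.
Variable R : realType.

Lemma Rplus_tr (G G' : gcd_graph R) q : is_gcd_graph G -> structured G ->
  (gE G' `<=` gE G)%fset -> (gP G `<=` gP G')%fset -> inRplus G' q -> inRplus G q.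
Proof.
move=> gG sG hE hP [[qp [qnP' [e [he hd]]]] hnn].
have heG : e \in gE G by apply: (fsubsetP hE).
have qnP : q \notin gP G by apply: contra qnP' => /(fsubsetP hP).
have hR : inR G q by split => //; split => //; exists e.
split => //.
have [e1p e2p _ _] := edge_pos gG heG.
case: (divR qp e1p e2p hd) => [[h1 h2]|[h1 h2]].
  have [k [k1 hk]] := struct_pos gG sG hR heG h1 h2.
  by move=> e' he'; exact: (pcase_pos (hk _ he') k1).
by have [a b] := hnn e he; case: (contra01 a h1).
Qed.

Lemma Rminus_tr (G G' : gcd_graph R) q : is_gcd_graph G -> structured G ->
  (gE G' `<=` gE G)%fset -> (gP G `<=` gP G')%fset -> inRminus G' q -> inRminus G q.
Proof.
move=> gG sG hE hP [[qp [qnP' [e [he hd]]]] hnn].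
have heG : e \in gE G by apply: (fsubsetP hE).
have qnP : q \notin gP G by apply: contra qnP' => /(fsubsetP hP).
have hR : inR G q by split => //; split => //; exists e.
split => //.
have [e1p e2p _ _] := edge_pos gG heG.
case: (divR qp e1p e2p hd) => [[h1 h2]|[h1 h2]].
  by have [a b] := hnn e he; case: (contra10 h1 a).
exact: (struct_neg gG sG hR heG h1 h2).
Qed.

Lemma exists_max (T : eqType) (s : seq T) (F : T -> R) x0 : x0 \in s ->
  exists2 x, x \in s & forall y, y \in s -> F y <= F x.
Proof.
elim: s x0 => [//|a s IH] x0 _.
case: s IH => [|b s] IH.
  by exists a; rewrite ?mem_head // => y; rewrite inE => /eqP ->.
have [x xs hx] := IH b (mem_head _ _).
have [le|lt] := leP (F a) (F x).
  exists x; first by rewrite inE xs orbT.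
  by move=> y; rewrite inE => /orP[/eqP ->|]; [|apply: hx].
exists a; first exact: mem_head.
move=> y; rewrite inE => /orP[/eqP -> //|/hx h]; exact: (le_trans h (ltW lt)).
Qed.

End Transfer.


Section Concl.
Local Open Scope fset_scope.
Definition Concl {R : realType} (tau : R) (G : gcd_graph R) : Prop :=
  exists G' : gcd_graph R,
    [/\ gcd_subgraph G' G /\ denominator_exact G' G,
        nontrivial G' /\ maximal (2 + tau) G',
        [/\ gP G `<` gP G',
            (forall p, p \in gP G' -> p \in gP G \/ inRplus G p),
            (forall p, inRplus G' p -> inRplus G p),
            (exists p, inRplus G p /\ ~ inRplus G' p) &
            (forall p, inRminus G' p -> inRminus G p)],
        (forall p, p \in gP G' `\` gP G -> 0 <= gf G' p /\ 0 <= gg G' p) &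
        quality (2 + tau) G *
          \prod_(p <- gP G' `\` gP G)
            ((1 - ((gf G' p == gg G' p) && (0 < gf G' p))%:R / p%:R) ^+ 2 *
             (1 - 1 / (p%:R `^ (1 + tau / 4))))
        <= quality (2 + tau) G'].
End Concl.

Section Max.
Variable R : realType.
Variable F : {fset rat} -> {fset rat} -> {fset (rat * rat)} -> R.

Lemma max_sub (V0 W0 : {fset rat}) (E0 : {fset (rat * rat)}) :
  exists V1 W1 E1, [/\ (V1 `<=` V0)%fset, (W1 `<=` W0)%fset,
    (forall e, e \in E1 -> [&& e \in E0, e.1 \in V1 & e.2 \in W1]),
    F V0 W0 [fset e in E0 | (e.1 \in V0) && (e.2 \in W0)]%fset <= F V1 W1 E1 &
    forall V W E, (V `<=` V1)%fset -> (W `<=` W1)%fset ->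
      (forall e, e \in E -> [&& e \in E1, e.1 \in V & e.2 \in W]) ->
      F V W E <= F V1 W1 E1].
Proof.
pose P (x : ({fset rat} * {fset rat}) * {fset (rat * rat)}) :=
  (x.2 `<=` [fset e in E0 | (e.1 \in x.1.1) && (e.2 \in x.1.2)])%fset.
pose s := [seq x <- [seq (xy, z) | xy <- [seq (x, y) | x <- fpowerset V0, y <- fpowerset W0],
                        z <- fpowerset E0] | P x].
have memS : forall (V W : {fset rat}) (E : {fset (rat * rat)}), (V `<=` V0)%fset -> (W `<=` W0)%fset ->
    (forall e, e \in E -> [&& e \in E0, e.1 \in V & e.2 \in W]) -> ((V, W), E) \in s.
  move=> V W E hV hW hE; rewrite /s mem_filter; apply/andP; split.
    apply/fsubsetP => e he; have := hE e he; rewrite !inE /= => /and3P[-> -> ->] //.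
  apply: allpairs_f; first by apply: allpairs_f; rewrite fpowersetE.
  rewrite fpowersetE; apply/fsubsetP => e he; by have /and3P[] := hE e he.
have x0s : ((V0, W0), [fset e in E0 | (e.1 \in V0) && (e.2 \in W0)]%fset) \in s.
  apply: memS => //; move=> e; rewrite !inE /= => /andP[-> /andP[-> ->]] //.
have [[[V1 W1] E1] xs hx] := @exists_max R _ _ (fun x => F x.1.1 x.1.2 x.2) _ x0s.
move: xs; rewrite /s mem_filter => /andP[hP /allpairsP [[VW E] [/= hVW hE0 heq]]].
case: heq => hvw hE1; subst.
move: hVW => /allpairsP [[V W] [/= hV hW heq2]].
case: heq2 => hV1 hW1; subst.
rewrite fpowersetE in hV; rewrite fpowersetE in hW.
move: hP; rewrite /P /= => hP.
have hE1 : forall e, e \in E -> [&& e \in E0, e.1 \in V & e.2 \in W].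
  by move=> e he; have := fsubsetP hP e he; rewrite !inE /= => /and3P[-> -> ->].
exists V, W, E; split => //.
  exact: (hx _ x0s).
move=> V2 W2 E2 hV2 hW2 hE2; apply: (hx ((V2, W2), E2)); apply: memS.
- exact: fsubset_trans hV2 hV.
- exact: fsubset_trans hW2 hW.
move=> e he; have /and3P[a b c] := hE2 e he; have /and3P[-> _ _] := hE1 e a.
by rewrite b c.
Qed.
End Max.

Section Finish.
Variables (R : realType) (tau : R) (G : gcd_graph R) (p i j : nat) (sv sw : int -> bool).
Hypothesis tau0 : 0 < tau.
Hypothesis gG : is_gcd_graph G.
Hypothesis sG : structured G.
Hypothesis pRp : inRplus G p.
Hypothesis hV : forall v, v \in gV G -> sv (ep p v) -> i%:Z <= ep p v.
Hypothesis hW : forall w, w \in gW G -> sw (ep p w) -> j%:Z <= ep p w.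
Hypothesis hE : forall e, e \in gE G -> sv (ep p e.1) -> sw (ep p e.2) ->
  ep p e.1 = (minn i j)%:Z \/ ep p e.2 = (minn i j)%:Z.
Hypothesis key : mu_theta (2 + tau) G *
  ((1 - (((i%:Z == j%:Z) && (0 < i%:Z))%:R / p%:R)) ^+ 2 * (1 - 1 / (p%:R `^ (1 + tau / 4))))
  <= mutheta (2 + tau) (gmu G) (Vo R G p sv) (Wo R G p sw) (Eo R G p sv sw) *
     (p%:R ^+ absz (i%:Z - j%:Z)).
Hypothesis pos : 0 < mu_theta (2 + tau) G *
  ((1 - (((i%:Z == j%:Z) && (0 < i%:Z))%:R / p%:R)) ^+ 2 * (1 - 1 / (p%:R `^ (1 + tau / 4)))).

Lemma finish : Concl tau G.
Proof.
have pp : prime p by case: pRp => -[].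
have pnP : p \notin gP G by case: pRp => -[_ []].
have [V1 [W1 [E1 [hV1 hW1 hE1' hge hmax]]]] :=
  @max_sub R (mutheta (2 + tau) (gmu G)) (Vo R G p sv) (Wo R G p sw) (gE G).
have hE1 : forall e, e \in E1 -> [&& e \in Eo R G p sv sw, e.1 \in V1 & e.2 \in W1].
  move=> e he; have /and3P[a b c] := hE1' e he; rewrite inEo a b c /=.
  by rewrite (fsubsetP hV1 _ b) (fsubsetP hW1 _ c).
pose G' := mkG R G p i j V1 W1 E1.
have subG := @mkG_sub R G p i j sv sw gG pp pnP hV hW hE V1 W1 E1 hV1 hW1 hE1.
have dexG := @mkG_dex R G p i j sv sw gG pp hV hW V1 W1 E1 hV1 hW1.
have [_ [_ [_ [_ [hEsub [hPsub _]]]]]] := subG.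
have gain0 : 0 < p%:R ^+ absz (i%:Z - j%:Z) :> R by rewrite exprn_gt0 // ltr0n prime_gt0.
have Ho0 : 0 < mutheta (2 + tau) (gmu G) (Vo R G p sv) (Wo R G p sw) (Eo R G p sv sw).
  have := lt_le_trans pos key; rewrite pmulr_lgt0 //.
have G'0 : 0 < mu_theta (2 + tau) G' by apply: lt_le_trans Ho0 hge.
exists G'; split.
- by split.
- split; last by move=> V W E hV0 hW0 hEE; apply: hmax.
  apply/eqP => h0; move: G'0; rewrite /mu_theta /mutheta /density; rewrite /G' /mkG /= in h0 *; rewrite h0 eqxx.
  by rewrite powR0 ?mul0r ?ltxx // gt_eqF // addr_gt0.
- split.
  + rewrite fproperEneq hPsub andbT; apply/eqP => h.
    have : p \in gP G' by rewrite /= in_fset1U eqxx.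
    by rewrite -h (negbTE pnP).
  + by move=> q; rewrite /= in_fset1U => /orP[/eqP ->|]; [right|left].
  + by move=> q; apply: (@Rplus_tr R G G' q gG sG hEsub hPsub).
  + exists p; split => //; case=> -[_ [hn _]] _.
    by move: hn; rewrite /= in_fset1U eqxx.
  + by move=> q; apply: (@Rminus_tr R G G' q gG sG hEsub hPsub).
- move=> q; rewrite in_fsetD /= in_fset1U => /andP[qnP /orP[/eqP ->|qP]].
    by rewrite /fo /go eqxx.
  by rewrite qP in qnP.
have PD : (gP G' `\` gP G)%fset = [fset p]%fset.
  apply/fsetP => q; rewrite in_fsetD /= in_fset1U in_fset1.
  by case: eqP => [->|_] /=; rewrite ?andNb ?pnP.
rewrite PD big_seq_fset1 /= /fo /go eqxx.
rewrite /quality /= big_fsetU1 //= /fo /go eqxx.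
set PiP := \prod_(q <- gP G) _.
have -> : \prod_(q <- gP G) (q%:R ^+ absz ((if q == p then i%:Z else gf G q) -
                                     (if q == p then j%:Z else gg G q))) = PiP :> R.
  apply: eq_big_seq => q qP; have qp : q != p by apply: contraNneq pnP => <-.
  by rewrite (negbTE qp).
have PiP0 : 0 <= PiP by apply: prodr_ge0 => q _; rewrite exprn_ge0.
rewrite mulrAC [X in _ <= X]mulrA.
apply: ler_wpM2r => //.
apply: (le_trans key); apply: ler_wpM2r; [exact: ltW|exact: hge].
Qed.
End Finish.


Section Sums.
Variable R : realType.

Lemma mutheta_Hf th (mu : R -> R) V W (E : {fset (rat * rat)}) :
  mutheta th mu V W E =
  Hf R th (\sum_(e <- E) (mu (ratr e.1) * mu (ratr e.2)))
        ((\sum_(t <- V) mu (ratr t)) * (\sum_(t <- W) mu (ratr t))).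
Proof.
rewrite /mutheta /density /Hf; case: eqP => [->|//].
by rewrite big_seq_fset0 mul0r.
Qed.

Lemma sum_filter (T : choiceType) (A : {fset T}) (P : pred T) (F : T -> R) :
  \sum_(x <- [fset x in A | P x]%fset) F x = \sum_(x <- A) (if P x then F x else 0).
Proof. by rewrite -big_fset_condE big_mkcond. Qed.

Lemma sum_ge_term (T : choiceType) (A : {fset T}) (F : T -> R) x :
  x \in A -> (forall y, y \in A -> 0 <= F y) -> F x <= \sum_(y <- A) F y.
Proof.
move=> xA h; rewrite (big_fsetD1 _ xA) /= lerDl.
rewrite big_seq; apply: sumr_ge0 => y; rewrite in_fsetD1 => /andP[_]; exact: h.
Qed.

Lemma sum_pos_mem (T : choiceType) (A : {fset T}) (F : T -> R) :
  0 < \sum_(y <- A) F y -> exists x, x \in A.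
Proof.
case: (fset_0Vmem A) => [->|[x xA]]; last by exists x.
by rewrite big_seq_fset0 ltxx.
Qed.

Lemma sum_ge0f (T : choiceType) (A : {fset T}) (F : T -> R) :
  (forall y, y \in A -> 0 <= F y) -> 0 <= \sum_(y <- A) F y.
Proof. by move=> h; rewrite big_seq; apply: sumr_ge0 => y; apply: h. Qed.

Lemma if_excl (a b : bool) (x : R) : ~~ (a && b) -> 0 <= x ->
  (if a then x else 0) + (if b then x else 0) <= x.
Proof. by case: a; case: b => //= _ hx; rewrite ?addr0 ?add0r ?lexx. Qed.

Lemma if_impl (a b : bool) (x : R) : (b -> a) -> 0 <= x ->
  (if b then x else 0) <= (if a then x else 0).
Proof. by case: a; case: b => //= h hx; have := h isT. Qed.

Lemma if_ge0 (a : bool) (x : R) : 0 <= x -> 0 <= (if a then x else 0).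
Proof. by case: a. Qed.

Lemma if_cover (a b c : bool) (x : R) : [|| a, b | c] -> 0 <= x ->
  x <= (if a then x else 0) + (if b then x else 0) + (if c then x else 0).
Proof.
case: a; case: b; case: c => //= _ hx; rewrite ?addr0 ?add0r //;
  rewrite -?addrA ?lerDl ?lerDr ?addr_ge0 //.
Qed.

End Sums.

Section Real.
Variable R : realType.

Lemma real_final (Q HA HE HF tA c P : R) : 0 < P -> 0 <= Q ->
  Q <= HA + HE + HF -> P * tA + 2 * c <= P ->
  [\/ Q * tA <= HA, Q * c <= HE * P | Q * c <= HF * P].
Proof.
move=> P0 Q0 hQ hP.
have [a|a] := leP (Q * tA) HA; first by apply: Or31.
have [b|b] := leP (Q * c) (HE * P); first by apply: Or32.
have [d|d] := leP (Q * c) (HF * P); first by apply: Or33.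
exfalso.
have h1 : P * Q <= P * (HA + HE + HF) by rewrite ler_pM2l.
have h2 : P * (HA + HE + HF) < P * (Q * tA) + 2 * (Q * c).
  rewrite !mulrDr; have := ltr_pM2l P0 HA (Q * tA); rewrite a => /idP h.
  rewrite (mulrC P HE) (mulrC P HF) in b d *; lra.
have h3 : P * (Q * tA) + 2 * (Q * c) <= Q * P.
  have -> : P * (Q * tA) + 2 * (Q * c) = Q * (P * tA + 2 * c) by ring.
  by rewrite ler_wpM2l.
have := lt_le_trans (le_lt_trans h1 h2) h3; rewrite mulrC ltxx //.
Qed.

Lemma numeric (P u : R) : 2 <= P -> P <= u -> u <= P ^+ 2 ->
  let c := 1 - 1 / u in
  [/\ P * ((1 - 1 / P) ^+ 2 * c) + 2 * c <= P, 0 < c & 0 < (1 - 1 / P) ^+ 2].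
Proof.
move=> P2 Pu uP c.
have P0 : 0 < P by apply: lt_le_trans P2; rewrite ltr0n.
have u0 : 0 < u by apply: lt_le_trans Pu.
have c0 : 0 < c.
  rewrite /c subr_gt0 ltr_pdivrMr // mul1r; apply: lt_le_trans Pu.
  by apply: lt_le_trans P2; rewrite ltr1n.
split => //.
- have e : P * ((1 - 1 / P) ^+ 2 * c) + 2 * c = c * (P + 1 / P).
    by rewrite /c; field; rewrite !gt_eqF.
  rewrite e /c.
  set q := 1 / P; set w := 1 / u.
  have q0 : 0 <= q by rewrite divr_ge0 // ltW.
  have qP : q * P = 1 by rewrite /q mulrC mulrA mulr1 mulfV // gt_eqF.
  have q2P : q ^+ 2 * P = q by rewrite expr2 -mulrA qP mulr1.
  have wq : q ^+ 2 <= w.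
    by rewrite /w /q expr_div_n expr1n !div1r lef_pV2 // posrE // exprn_gt0.
  have h1 : 0 <= (w - q ^+ 2) * (P + q) by rewrite mulr_ge0 // ?subr_ge0 // addr_ge0 // ltW.
  have q3 : 0 <= q ^+ 3 by rewrite exprn_ge0.
  have e2 : (1 - w) * (P + q) = P + q - (w - q ^+ 2) * (P + q) - q ^+ 2 * P - q ^+ 3.
    by ring.
  rewrite e2 q2P; lra.
- rewrite exprn_gt0 // subr_gt0 ltr_pdivrMr // mul1r.
  by apply: lt_le_trans P2; rewrite ltr1n.
Qed.
End Real.

Lemma eqK1 K : (K%:Z == (K.+1)%:Z) = false.
Proof. by apply/negbTE/eqP => h; lia. Qed.
Lemma eqK1' K : ((K.+1)%:Z == K%:Z) = false.
Proof. by apply/negbTE/eqP => h; lia. Qed.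
Lemma absK1 K : absz (K%:Z - (K.+1)%:Z) = 1%N.
Proof. lia. Qed.
Lemma absK1' K : absz ((K.+1)%:Z - K%:Z) = 1%N.
Proof. lia. Qed.

Lemma pA {a b : int} {K} : pcase a b (K.+1)%:Z -> (K.+1)%:Z <= a -> (K.+1)%:Z <= b ->
  a = (K.+1)%:Z \/ b = (K.+1)%:Z.
Proof. rewrite /pcase; lia. Qed.

Lemma pcover {a b : int} {K} : pcase a b (K.+1)%:Z ->
  [|| ((K.+1)%:Z <= a) && ((K.+1)%:Z <= b), (a == K%:Z) && (b == (K.+1)%:Z)
    | (a == (K.+1)%:Z) && (b == K%:Z)].
Proof.
rewrite /pcase => h.
have [h1|h1] : (((K.+1)%:Z <= a) && ((K.+1)%:Z <= b)) \/
  ((a == K%:Z) && (b == (K.+1)%:Z)) \/ ((a == (K.+1)%:Z) && (b == K%:Z)).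
  2: by rewrite h1.
  2: by case: h1 => ->; rewrite ?orbT.
case: h => [[-> ->]|[[-> ->]|[[-> ->]|[[-> ->]|[-> ->]]]]].
- by right; left; rewrite !eqxx /=; apply/andP; split; apply/eqP; lia.
- by right; right; apply/andP; split; apply/eqP; lia.
- by left; rewrite lexx.
- by left; rewrite lexx /=; lia.
- by left; rewrite lexx andbT; lia.
Qed.

Section Main.
Variables (R : realType) (tau : R) (G : gcd_graph R).
Hypothesis tau0 : 0 < tau.
Hypothesis tau1 : tau < 1 / 100.
Hypothesis gG : is_gcd_graph G.
Hypothesis sG : structured G.

Let mu := gmu G.

Lemma mu_pos t : t \in gV G \/ t \in gW G -> 0 < mu (ratr t).
Proof.
case: gG => [[hmu [hV [hW _]]] _] h; apply: hmu; rewrite ltr0q.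
by case: h => h; [apply: hV|apply: hW].
Qed.

Lemma Xo_ge0 (sv : int -> bool) p : 0 <= \sum_(t <- Vo R G p sv) mu (ratr t).
Proof.
apply: sum_ge0f => t; rewrite inVo => /andP[h _]; exact/ltW/mu_pos/or_introl.
Qed.

Lemma Yo_ge0 (sw : int -> bool) p : 0 <= \sum_(t <- Wo R G p sw) mu (ratr t).
Proof.
apply: sum_ge0f => t; rewrite inWo => /andP[h _]; exact/ltW/mu_pos/or_intror.
Qed.

Lemma mo_ge0 (sv sw : int -> bool) p :
  0 <= \sum_(e <- Eo R G p sv sw) (mu (ratr e.1) * mu (ratr e.2)).
Proof.
apply: sum_ge0f => e; rewrite inEo => /and3P[he _ _].
have [_ _ a b] := edge_pos gG he.
by apply: mulr_ge0; apply/ltW/mu_pos; [left|right].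
Qed.

Lemma mo_Z (sv sw : int -> bool) p :
  0 < \sum_(e <- Eo R G p sv sw) (mu (ratr e.1) * mu (ratr e.2)) ->
  0 < (\sum_(t <- Vo R G p sv) mu (ratr t)) * (\sum_(t <- Wo R G p sw) mu (ratr t)).
Proof.
move=> /sum_pos_mem [e]; rewrite inEo => /and3P[_ a b].
have a' := a; have b' := b.
rewrite inVo in a'; rewrite inWo in b'.
case/andP: a' => a1 _; case/andP: b' => b1 _.
apply: mulr_gt0.
  apply: (lt_le_trans _ (@sum_ge_term R _ _ (fun t => mu (ratr t)) _ a _)).
    by apply: mu_pos; left.
  by move=> y; rewrite inVo => /andP[h _]; apply/ltW/mu_pos; left.
apply: (lt_le_trans _ (@sum_ge_term R _ _ (fun t => mu (ratr t)) _ b _)).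
  by apply: mu_pos; right.
by move=> y; rewrite inWo => /andP[h _]; apply/ltW/mu_pos; right.
Qed.


End Main.



Lemma main_concl (R : realType) (tau : R) (G : gcd_graph R) :
  0 < tau -> tau < 1 / 100 -> is_gcd_graph G -> structured G ->
  nontrivial G -> (exists p, inRplus G p) -> Concl tau G.
Proof.
move=> tau0 tau1 gG sG ntG [p pRp].
pose mu := gmu G.
have pRp' := pRp.
case: pRp' => [[pp [pnP [e0 [he0 hd]]]] hnn].
have [e01 e02 e0V e0W] := edge_pos gG he0.
have hR : inR G p by case: pRp.
have [k [k1 hk]] : exists k : int, 1 <= k /\
    forall e, e \in gE G -> pcase (ep p e.1) (ep p e.2) k.
  case: (divR pp e01 e02 hd) => [[h1 h2]|[h1 h2]].
    exact: (struct_pos gG sG hR he0 h1 h2).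
  by have [a _] := hnn e0 he0; case: (contra01 a h1).
have [K eK] : exists K : nat, k = (K.+1)%:Z.
  by case: k k1 {hk} => [[|n]|n] //= _; exists n.
subst k.
pose sA := fun x : int => (K.+1)%:Z <= x.
pose s1 := fun x : int => x == K%:Z.
pose s2 := fun x : int => x == (K.+1)%:Z.
have hVA : forall v, v \in gV G -> sA (ep p v) -> (K.+1)%:Z <= ep p v by [].
have hWA : forall v, v \in gW G -> sA (ep p v) -> (K.+1)%:Z <= ep p v by [].
have hV1 : forall v, v \in gV G -> s1 (ep p v) -> K%:Z <= ep p v by move=> v _ /eqP ->.
have hW1 : forall v, v \in gW G -> s1 (ep p v) -> K%:Z <= ep p v by move=> v _ /eqP ->.
have hV2 : forall v, v \in gV G -> s2 (ep p v) -> (K.+1)%:Z <= ep p v by move=> v _ /eqP ->.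
have hW2 : forall v, v \in gW G -> s2 (ep p v) -> (K.+1)%:Z <= ep p v by move=> v _ /eqP ->.
have hEA : forall e, e \in gE G -> sA (ep p e.1) -> sA (ep p e.2) ->
    ep p e.1 = (minn K.+1 K.+1)%:Z \/ ep p e.2 = (minn K.+1 K.+1)%:Z.
  by move=> e he a b; rewrite minnn; exact: (pA (hk e he) a b).
have hEE : forall e, e \in gE G -> s1 (ep p e.1) -> s2 (ep p e.2) ->
    ep p e.1 = (minn K K.+1)%:Z \/ ep p e.2 = (minn K K.+1)%:Z.
  by move=> e _ /eqP a _; left; rewrite a (minn_idPl (leqnSn K)).
have hEF : forall e, e \in gE G -> s2 (ep p e.1) -> s1 (ep p e.2) ->
    ep p e.1 = (minn K.+1 K)%:Z \/ ep p e.2 = (minn K.+1 K)%:Z.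
  by move=> e _ _ /eqP b; right; rewrite b (minn_idPr (leqnSn K)).
pose XX := \sum_(t <- gV G) mu (ratr t).
pose YY := \sum_(t <- gW G) mu (ratr t).
pose mm := \sum_(e <- gE G) (mu (ratr e.1) * mu (ratr e.2)).
pose XA := \sum_(t <- Vo R G p sA) mu (ratr t).
pose YA := \sum_(t <- Wo R G p sA) mu (ratr t).
pose XE := \sum_(t <- Vo R G p s1) mu (ratr t).
pose YE := \sum_(t <- Wo R G p s2) mu (ratr t).
pose XF := \sum_(t <- Vo R G p s2) mu (ratr t).
pose YF := \sum_(t <- Wo R G p s1) mu (ratr t).
pose mA := \sum_(e <- Eo R G p sA sA) (mu (ratr e.1) * mu (ratr e.2)).
pose mE := \sum_(e <- Eo R G p s1 s2) (mu (ratr e.1) * mu (ratr e.2)).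
pose mF := \sum_(e <- Eo R G p s2 s1) (mu (ratr e.1) * mu (ratr e.2)).
have XA0 : 0 <= XA := @Xo_ge0 R G gG _ _.
have XE0 : 0 <= XE := @Xo_ge0 R G gG _ _.
have XF0 : 0 <= XF := @Xo_ge0 R G gG _ _.
have YA0 : 0 <= YA := @Yo_ge0 R G gG _ _.
have YE0 : 0 <= YE := @Yo_ge0 R G gG _ _.
have YF0 : 0 <= YF := @Yo_ge0 R G gG _ _.
have mA0 : 0 <= mA := @mo_ge0 R G gG _ _ _.
have mE0 : 0 <= mE := @mo_ge0 R G gG _ _ _.
have mF0 : 0 <= mF := @mo_ge0 R G gG _ _ _.
have hXAE : XA + XE <= XX.
  rewrite /XA /XE /XX /Vo !sum_filter -big_split /= big_seq [leRHS]big_seq.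
  apply: ler_sum => t tV; apply: if_excl; last by apply/ltW/(@mu_pos R G gG _); left.
  by rewrite /sA /s1; apply/negP => /andP[h /eqP e]; by rewrite e lez_nat ltnn in h.
have hXFA : XF <= XA.
  rewrite /XA /XF /Vo !sum_filter big_seq [leRHS]big_seq.
  apply: ler_sum => t tV; apply: if_impl; last by apply/ltW/(@mu_pos R G gG _); left.
  by rewrite /sA /s2 => /eqP ->.
have hYAF : YA + YF <= YY.
  rewrite /YA /YF /YY /Wo !sum_filter -big_split /= big_seq [leRHS]big_seq.
  apply: ler_sum => t tV; apply: if_excl; last by apply/ltW/(@mu_pos R G gG _); right.
  by rewrite /sA /s1; apply/negP => /andP[h /eqP e]; by rewrite e lez_nat ltnn in h.
have hYEA : YE <= YA.
  rewrite /YA /YE /Wo !sum_filter big_seq [leRHS]big_seq.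
  apply: ler_sum => t tV; apply: if_impl; last by apply/ltW/(@mu_pos R G gG _); right.
  by rewrite /sA /s2 => /eqP ->.
have hm : mm <= mA + mE + mF.
  rewrite /mA /mE /mF /mm /Eo !sum_filter -!big_split /= big_seq [leRHS]big_seq.
  apply: ler_sum => e he; apply: if_cover; last first.
    by have [_ _ a b] := edge_pos gG he; apply: mulr_ge0; apply/ltW/(@mu_pos R G gG _); [left|right].
  have [_ _ a b] := edge_pos gG he.
  by rewrite !inVo !inWo a b /=; exact: (pcover (hk e he)).
have mm0 : 0 < mm.
  apply: (lt_le_trans _ (@sum_ge_term R _ _ (fun e => mu (ratr e.1) * mu (ratr e.2)) _ he0 _)).
    by apply: mulr_gt0; apply: (@mu_pos R G gG _); [left|right].
  by move=> e he; have [_ _ a b] := edge_pos gG he; apply: mulr_ge0; apply/ltW/(@mu_pos R G gG _); [left|right].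
have XY0 : 0 < XX * YY.
  apply: mulr_gt0.
    apply: (lt_le_trans _ (@sum_ge_term R _ _ (fun t => mu (ratr t)) _ e0V _)).
      by apply: (@mu_pos R G gG _); left.
    by move=> y yV; apply/ltW/(@mu_pos R G gG _); left.
  apply: (lt_le_trans _ (@sum_ge_term R _ _ (fun t => mu (ratr t)) _ e0W _)).
    by apply: (@mu_pos R G gG _); right.
  by move=> y yV; apply/ltW/(@mu_pos R G gG _); right.
have hZ : XA * YA + XE * YE + XF * YF <= XX * YY.
  have h1 : XE * YE <= XE * YA := ler_wpM2l XE0 hYEA.
  have h2 : XF * YF <= XA * YF := ler_wpM2r YF0 hXFA.
  have h3 : (XA + XE) * YA <= XX * YA := ler_wpM2r YA0 hXAE.
  have h4 : XA * YF <= XX * YF.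
    by apply: (ler_wpM2r YF0); apply: (le_trans _ hXAE); rewrite lerDl.
  have h5 : XX * (YA + YF) <= XX * YY.
    by apply: ler_wpM2l hYAF; apply: (le_trans _ hXAE); rewrite addr_ge0.
  lra.
have th1 : 1 < 2 + tau by lra.
have zA : 0 < mA -> 0 < XA * YA := @mo_Z R G gG sA sA p.
have zE : 0 < mE -> 0 < XE * YE := @mo_Z R G gG s1 s2 p.
have zF : 0 < mF -> 0 < XF * YF := @mo_Z R G gG s2 s1 p.
have ZA0 : 0 <= XA * YA := mulr_ge0 XA0 YA0.
have ZE0 : 0 <= XE * YE := mulr_ge0 XE0 YE0.
have ZF0 : 0 <= XF * YF := mulr_ge0 XF0 YF0.
have zAE : 0 < mA + mE -> 0 < XA * YA + XE * YE.
  move=> h; have [a|a] := ltP 0 mA; first by have := zA a; lra.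
  have [b|b] := ltP 0 mE; first by have := zE b; lra.
  lra.
have Zsum : 0 < XA * YA + XE * YE + XF * YF.
  have [a|a] := ltP 0 (mA + mE); first by have := zAE a; lra.
  have [b|b] := ltP 0 mF; first by have := zF b; lra.
  lra.
have hQ : mu_theta (2 + tau) G <=
    mutheta (2 + tau) mu (Vo R G p sA) (Wo R G p sA) (Eo R G p sA sA) +
    mutheta (2 + tau) mu (Vo R G p s1) (Wo R G p s2) (Eo R G p s1 s2) +
    mutheta (2 + tau) mu (Vo R G p s2) (Wo R G p s1) (Eo R G p s2 s1).
  rewrite /mu_theta !mutheta_Hf.
  apply: (le_trans (@Hf_mono R (2 + tau) mm (mA + mE + mF) (XX * YY) (XA * YA + XE * YE + XF * YF)
     th1 (ltW mm0) hm Zsum hZ)).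
  apply: (le_trans (@Hf_subadd R (2 + tau) (mA + mE) mF (XA * YA + XE * YE) (XF * YF) th1
     (addr_ge0 mA0 mE0) mF0 (addr_ge0 ZA0 ZE0) ZF0 zAE zF)).
  apply: lerD => //.
  exact: (@Hf_subadd R (2 + tau) mA mE (XA * YA) (XE * YE) th1 mA0 mE0 ZA0 ZE0 zA zE).
pose P : R := p%:R.
have P2 : 2 <= P by rewrite /P (ler_nat R 2 p) prime_gt1.
have P0 : 0 < P by apply: lt_le_trans P2.
have P1 : 1 <= P by apply: le_trans P2; rewrite ler1n.
pose u := P `^ (1 + tau / 4).
have Pu : P <= u.
  rewrite /u -{1}(powRr1 (ltW P0)); apply: ler_powR => //; lra.
have uP : u <= P ^+ 2.
  rewrite /u -powR_mulrn ?(ltW P0) //; apply: ler_powR => //; lra.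
have [hnum c0 t0] := @numeric R P u P2 Pu uP.
have Q0 : 0 < mu_theta (2 + tau) G.
  by rewrite /mu_theta mutheta_Hf; apply: Hf_gt0.
case: (@real_final R _ _ _ _ ((1 - 1 / P) ^+ 2 * (1 - 1 / u)) (1 - 1 / u) P P0 (ltW Q0) hQ hnum)
  => [hA|hE|hF].
- apply: (@finish R tau G p K.+1 K.+1 sA sA tau0 gG sG pRp hVA hWA hEA).
    by rewrite eqxx /= subrr /= expr0 mulr1.
  by rewrite eqxx /=; apply: mulr_gt0 => //; exact: mulr_gt0.
- have eb := eqK1 K; have ea := absK1 K.
  apply: (@finish R tau G p K K.+1 s1 s2 tau0 gG sG pRp hV1 hW2 hEE).
    rewrite eb ea /= ?mulr0n ?mul0r ?subr0 ?expr1n ?mul1r ?expr1.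
    by have := hE; rewrite div1r => h; exact: h.
  by rewrite eb /= ?mulr0n ?mul0r ?subr0 ?expr1n ?mul1r; apply: mulr_gt0 => //; rewrite -div1r.
- have eb := eqK1' K; have ea := absK1' K.
  apply: (@finish R tau G p K.+1 K s2 s1 tau0 gG sG pRp hV2 hW1 hEF).
    rewrite eb ea /= ?mulr0n ?mul0r ?subr0 ?expr1n ?mul1r ?expr1.
    by have := hF; rewrite div1r => h; exact: h.
  by rewrite eb /= ?mulr0n ?mul0r ?subr0 ?expr1n ?mul1r; apply: mulr_gt0 => //; rewrite -div1r.
Qed.


Local Open Scope fset_scope.

Theorem proposition7p17 (R : realType) (tau M : R) (G : gcd_graph R) :
  0 < tau -> tau < 1 / 100 -> 2 <= M ->
  is_gcd_graph G -> nontrivial G -> structured G ->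
  (forall p, inR G p -> C6 tau M < p%:R) ->
  (exists p, inRplus G p) ->
  exists G' : gcd_graph R,
    [/\ gcd_subgraph G' G /\ denominator_exact G' G,
        (* (a) *)
        nontrivial G' /\ maximal (2 + tau) G',
        (* (b) *)
        [/\ gP G `<` gP G',
            (forall p, p \in gP G' -> p \in gP G \/ inRplus G p),
            (forall p, inRplus G' p -> inRplus G p),
            (exists p, inRplus G p /\ ~ inRplus G' p) &
            (forall p, inRminus G' p -> inRminus G p)],
        (* (c) *)
        (forall p, p \in gP G' `\` gP G -> 0 <= gf G' p /\ 0 <= gg G' p) &
        (* (d) *)
        quality (2 + tau) G *
          \prod_(p <- gP G' `\` gP G)
            ((1 - ((gf G' p == gg G' p) && (0 < gf G' p))%:R / p%:R) ^+ 2 *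
             (1 - 1 / (p%:R `^ (1 + tau / 4))))
        <= quality (2 + tau) G'].
Proof.
move=> tau0 tau1 _ gG ntG sG _ hex.
exact: (@main_concl R tau G tau0 tau1 gG sG ntG hex).
Qed.
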